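(* Let $E$ and $E^c=\partial\overline{\mathcal{G}}\setminus E$ be nonempty clopen subsets of $\partial\overline{\mathcal{G}}$. Let $f:\overline{\mathcal{G}}\to\mathbb{R}$ be harmonic with $f=C\ge 0$ on $E$ and $f>C$ on $E^c$. Let $\epsilon>0$, and let $t$ be a regular value of $f$ with $C<t<\min_{x\in E^c}f(x)$ and $d(x,E)<\epsilon$ whenever $f(x)\le t$. Then $f^{-1}(t)$ is a finite set of points interior to edges of $\mathcal{G}$. Let $\widetilde{\mathcal{G}}$ be the graph obtained from $\mathcal{G}$ by adding the points of $f^{-1}(t)$ as vertices and subdividing the corresponding edges, and put $\mathcal{G}_t=\widetilde{\mathcal{G}}\cap f^{-1}([t,\infty))$. Then: - $\mathcal{G}_t$ is a subgraph of $\widetilde{\mathcal{G}}$, namely a union of closed edges of $\widetilde{\mathcal{G}}$; - every point of $f^{-1}(t)$ is a boundary vertex of $\mathcal{G}_t$ (of degree one); - $\partial_\nu f(x)>0$ for every $x$ with $f(x)=t$, where $\partial_\nu$ is computed along the edge of $\mathcal{G}_t$ incident on $x$, in the direction pointing from $x$ into that edge.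
   Context: $\mathcal{G}$ is a connected, locally finite metric graph with countable vertex set and countable edge set. Each edge has a positive length and is identified with an interval. $\mathcal{G}$ carries the geodesic distance $d$, and $\overline{\mathcal{G}}$ is its metric completion. A designated set of vertices, containing all vertices of degree $1$, forms the boundary vertices. $\mathcal{G}_{int}$ is $\mathcal{G}$ minus the boundary vertices, and $\partial\overline{\mathcal{G}}=\overline{\mathcal{G}}\setminus\mathcal{G}_{int}$. Standing assumptions: $\overline{\mathcal{G}}$ is compact and $\partial\overline{\mathcal{G}}$ is totally disconnected. Clopen means open and closed in $\partial\overline{\mathcal{G}}$. A function $f:\overline{\mathcal{G}}\to\mathbb{R}$ is harmonic if it is continuous, linear on each edge, and satisfies $\sum_{e\sim v}\partial_\nu f_e(v)=0$ at every interior vertex $v$, where $\partial_\nu f_e(v)$ is the derivative of $f_e$ at $v$ in the direction from $v$ into the edge $e$. A point $x\in\mathcal{G}$ is a critical point of $f$ if $x$ is a vertex or $f'(x)=0$. A number is a critical value if its preimage contains a critical point. Values in the range of $f$ that are not critical values are regular values. *)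

(* Defs.v *)
From Stdlib Require Import Reals Lra List ClassicalEpsilon.
Open Scope R_scope.

(* A metric graph: vertices, edges, endpoints of each edge (an edge e is
   identified with the interval [0, len e], parameter 0 at [src e] and
   parameter [len e] at [tgt e]); loops and multiple edges are allowed. *)
Record MetricGraph := {
  Vx : Type;
  Ed : Type;
  src : Ed -> Vx;
  tgt : Ed -> Vx;
  len : Ed -> R;
  len_pos : forall e, 0 < len e
}.

Section Graph.
Variable G : MetricGraph.

Definition incident (e : Ed G) (v : Vx G) : Prop := src G e = v \/ tgt G e = v.

Definition countable_type (T : Type) : Prop :=
  exists c : T -> nat, forall x y, c x = c y -> x = y.

Definition locally_finite : Prop :=
  forall v, exists l : list (Ed G), forall e, incident e v <-> In e l.

Fixpoint is_walk (u v : Vx G) (l : list (Ed G)) : Prop :=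
  match l with
  | nil => u = v
  | e :: l' => (src G e = u /\ is_walk (tgt G e) v l')
            \/ (tgt G e = u /\ is_walk (src G e) v l')
  end.

Fixpoint walk_len (l : list (Ed G)) : R :=
  match l with nil => 0 | e :: l' => len G e + walk_len l' end.

Definition connected_graph : Prop := forall u v, exists l, is_walk u v l.

Definition degree_one (v : Vx G) : Prop :=
  exists e, incident e v /\ src G e <> tgt G e /\
            forall e', incident e' v -> e' = e.

Definition Point : Type :=
  (Vx G + { p : Ed G * R | 0 < snd p < len G (fst p) })%type.

Definition pt (e : Ed G) (s : R) : Point :=
  match Rlt_dec 0 s with
  | left h1 =>
      match Rlt_dec s (len G e) with
      | left h2 => inr (exist _ (e, s) (conj h1 h2))
      | right _ => inl (tgt G e)
      end
  | right _ => inl (src G e)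
  end.

Definition exits (x : Point) (a : Vx G) (da : R) : Prop :=
  match x with
  | inl v => a = v /\ da = 0
  | inr p => let e := fst (proj1_sig p) in let s := snd (proj1_sig p) in
             (a = src G e /\ da = s) \/ (a = tgt G e /\ da = len G e - s)
  end.

Definition path_length (x y : Point) (r : R) : Prop :=
  (exists a da b db l, exits x a da /\ exits y b db /\ is_walk a b l /\
                       r = da + walk_len l + db)
  \/ (match x, y with
      | inr p, inr q => fst (proj1_sig p) = fst (proj1_sig q) /\
                        r = Rabs (snd (proj1_sig p) - snd (proj1_sig q))
      | _, _ => False end).

Definition geodesic_dist (x y : Point) (r : R) : Prop :=
  (forall r', path_length x y r' -> r <= r') /\
  (forall m, (forall r', path_length x y r' -> m <= r') -> m <= r).

Variable Bd : Vx G -> Prop.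

Definition boundary_vertices_ok : Prop := forall v, degree_one v -> Bd v.

Definition in_Gint (p : Point) : Prop :=
  match p with inl v => ~ Bd v | inr _ => True end.

Variable X : Type.
Variable dX : X -> X -> R.
Variable iota : Point -> X.

Definition is_metric : Prop :=
  (forall x y, 0 <= dX x y) /\ (forall x y, dX x y = 0 <-> x = y) /\
  (forall x y, dX x y = dX y x) /\
  (forall x y z, dX x z <= dX x y + dX y z).

Definition cauchy (u : nat -> X) : Prop :=
  forall eps, 0 < eps -> exists N, forall n m, (N <= n)%nat -> (N <= m)%nat ->
    dX (u n) (u m) < eps.

Definition converges_to (u : nat -> X) (l : X) : Prop :=
  forall eps, 0 < eps -> exists N, forall n, (N <= n)%nat -> dX (u n) l < eps.

Definition is_metric_completion : Prop :=
  is_metric /\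
  (forall x y r, geodesic_dist x y r -> dX (iota x) (iota y) = r) /\
  (forall z eps, 0 < eps -> exists p, dX z (iota p) < eps) /\
  (forall u, cauchy u -> exists l, converges_to u l).

Definition open_set (U : X -> Prop) : Prop :=
  forall x, U x -> exists r, 0 < r /\ forall y, dX x y < r -> U y.

Definition compact_space : Prop :=
  forall (I : Type) (U : I -> X -> Prop), (forall i, open_set (U i)) ->
    (forall x, exists i, U i x) ->
    exists l : list I, forall x, exists i, In i l /\ U i x.

Definition bdry (x : X) : Prop := ~ exists p, in_Gint p /\ iota p = x.

Definition connected_subset (S : X -> Prop) : Prop :=
  ~ exists U1 U2, open_set U1 /\ open_set U2 /\
      (forall x, S x -> U1 x \/ U2 x) /\
      (forall x, S x -> U1 x -> U2 x -> False) /\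
      (exists x, S x /\ U1 x) /\ (exists x, S x /\ U2 x).

Definition totally_disconnected (B : X -> Prop) : Prop :=
  forall S : X -> Prop, (forall x, S x -> B x) -> connected_subset S ->
    forall x y, S x -> S y -> x = y.

Definition clopen_in (B E : X -> Prop) : Prop :=
  (forall x, E x -> B x) /\
  (exists U, open_set U /\ forall x, E x <-> (B x /\ U x)) /\
  (exists U, open_set U /\ forall x, (B x /\ ~ E x) <-> (B x /\ U x)).

Variable f : X -> R.

Definition continuous_X : Prop :=
  forall x eps, 0 < eps -> exists delta, 0 < delta /\
    forall y, dX x y < delta -> Rabs (f x - f y) < eps.

Definition fe (e : Ed G) (s : R) : R := f (iota (pt e s)).

Definition slope (e : Ed G) : R := (fe e (len G e) - fe e 0) / len G e.

(* derivative of f_e at v in the direction from v into e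
   (sum over both ends for a loop) *)
Definition out_deriv (v : Vx G) (e : Ed G) : R :=
  (if excluded_middle_informative (src G e = v) then slope e else 0) +
  (if excluded_middle_informative (tgt G e = v) then - slope e else 0).

Fixpoint sum_list (l : list (Ed G)) (g : Ed G -> R) : R :=
  match l with nil => 0 | e :: l' => g e + sum_list l' g end.

Definition harmonic : Prop :=
  continuous_X /\
  (forall e s, 0 <= s <= len G e -> fe e s = fe e 0 + slope e * s) /\
  (forall v, ~ Bd v -> forall l, NoDup l -> (forall e, incident e v <-> In e l) ->
     sum_list l (out_deriv v) = 0).

Definition critical_point (p : Point) : Prop :=
  match p with
  | inl _ => True
  | inr q => slope (fst (proj1_sig q)) = 0
  end.

Definition critical_value (c : R) : Prop :=
  exists p, critical_point p /\ f (iota p) = c.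

Definition regular_value (t : R) : Prop :=
  (exists x, f x = t) /\ ~ critical_value t.

(** Subdivision of G at a finite list S of interior points (e, s). *)
Definition is_cut (S : list (Ed G * R)) (e : Ed G) (a : R) : Prop :=
  a = 0 \/ a = len G e \/ In (e, a) S.

Definition tilde_edge (S : list (Ed G * R)) (e : Ed G) (a b : R) : Prop :=
  0 <= a /\ a < b /\ b <= len G e /\ is_cut S e a /\ is_cut S e b /\
  forall c, a < c < b -> ~ is_cut S e c.

Definition seg_in_Gt (t : R) (e : Ed G) (a b : R) : Prop :=
  forall s, a <= s <= b -> t <= fe e s.

End Graph.

(* Main.v *)
Require Import Defs.
From Stdlib Require Import Reals List.
Open Scope R_scope.

From Stdlib Require Import Lra Psatz ProofIrrelevance Classical FinFun.

Lemma nodup_of_cover (A : Type) (P : A -> Prop) (l : list A) :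
  (forall x, P x -> In x l) -> exists l', NoDup l' /\ forall x, In x l' <-> P x.
Proof.
  revert P; induction l as [|a l IH]; intros P HP.
  - exists nil; split; [constructor|]. intros x; split; [intros []|intros Hx; destruct (HP x Hx)].
  - destruct (IH (fun x => P x /\ x <> a)) as [l' [Hnd Hl']].
    { intros x [Px Hxa]. destruct (HP x Px) as [Hax|Hin]; [congruence|assumption]. }
    destruct (classic (P a)) as [Pa|nPa].
    + exists (a :: l'); split.
      * constructor; [|assumption]. intros Hin. apply Hl' in Hin. tauto.
      * intros x; split.
        -- intros [Hax|Hin]; [subst; assumption|apply Hl' in Hin; tauto].
        -- intros Px. destruct (classic (x = a)) as [Hxa|Hxa];
             [left; congruence|right; apply Hl'; tauto].
    + exists l'; split; [assumption|]. intros x; split.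
      * intros Hin; apply Hl' in Hin; tauto.
      * intros Px; apply Hl'; split; [assumption|]. intros Hxa; subst; contradiction.
Qed.

Lemma walk_len_nonneg (G : MetricGraph) l : 0 <= walk_len G l.
Proof. induction l; simpl; [lra|]. pose proof (len_pos G a); lra. Qed.

Lemma path_lb (G : MetricGraph) (q1 q2 : {p : Ed G * R | 0 < snd p < len G (fst p)}) r :
  fst (proj1_sig q1) <> fst (proj1_sig q2) ->
  path_length G (inr q1) (inr q2) r ->
  Rmin (snd (proj1_sig q1)) (len G (fst (proj1_sig q1)) - snd (proj1_sig q1)) <= r.
Proof.
  destruct q1 as [[e1 s1] h1]; destruct q2 as [[e2 s2] h2]; simpl in *.
  intros Hne [[a [da [b [db [l [Hx [Hy [_ Hr]]]]]]]] | [Heq _]]; [|contradiction].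
  simpl in Hx, Hy. pose proof (walk_len_nonneg G l).
  assert (0 <= db) by (destruct Hy as [[_ ->]|[_ ->]]; lra).
  destruct Hx as [[_ ->]|[_ ->]];
    [pose proof (Rmin_l s1 (len G e1 - s1)) | pose proof (Rmin_r s1 (len G e1 - s1))]; lra.
Qed.

Lemma geo_exists (G : MetricGraph) (Hconn : connected_graph G) x y (m : R) :
  (exists a da b db, exits G x a da /\ exits G y b db) ->
  (forall r, path_length G x y r -> m <= r) ->
  exists r0, geodesic_dist G x y r0 /\ m <= r0.
Proof.
  intros [a [da [b [db [Ha Hb]]]]] Hlb.
  destruct (Hconn a b) as [l Hl].
  set (Q := fun z => path_length G x y (- z)).
  assert (Hbd : bound Q). { exists (- m). intros z Hz. apply Hlb in Hz. lra. }
  assert (Hne : exists z, Q z).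
  { exists (- (da + walk_len G l + db)). unfold Q. left. exists a, da, b, db, l.
    split; [exact Ha|split; [exact Hb|split; [exact Hl|]]]. ring. }
  destruct (completeness Q Hbd Hne) as [M [HM1 HM2]].
  exists (- M). split; [split|].
  - intros r' Hr'. assert (HQ : Q (- r')) by (unfold Q; rewrite Ropp_involutive; exact Hr').
    apply HM1 in HQ. lra.
  - intros m' Hm'. assert (M <= - m'). { apply HM2. intros z Hz. apply Hm' in Hz. lra. } lra.
  - assert (M <= - m). { apply HM2. intros z Hz. apply Hlb in Hz. lra. } lra.
Qed.

Lemma pt_inr (G : MetricGraph) e s (h : 0 < s < len G e) :
  pt G e s = inr (exist (fun p : Ed G * R => 0 < snd p < len G (fst p)) (e, s) h).
Proof.
  unfold pt. destruct (Rlt_dec 0 s) as [h1|h1]; [|exfalso; lra].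
  destruct (Rlt_dec s (len G e)) as [h2|h2]; [|exfalso; lra].
  f_equal. f_equal. apply proof_irrelevance.
Qed.

Lemma pt_0 (G : MetricGraph) e : pt G e 0 = inl (src G e).
Proof. unfold pt; destruct (Rlt_dec 0 0); [exfalso; lra|reflexivity]. Qed.

Lemma pt_len (G : MetricGraph) e : pt G e (len G e) = inl (tgt G e).
Proof.
  pose proof (len_pos G e).
  unfold pt; destruct (Rlt_dec 0 (len G e)); [|exfalso; lra].
  destruct (Rlt_dec (len G e) (len G e)); [exfalso; lra|reflexivity].
Qed.

Theorem lemma3p10
  (G : MetricGraph) (Bd : Vx G -> Prop)
  (X : Type) (dX : X -> X -> R) (iota : Point G -> X)
  (* standing assumptions on the graph *)
  (Hconn : connected_graph G)
  (HVc : countable_type (Vx G)) (HEdc : countable_type (Ed G))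
  (Hlf : locally_finite G)
  (HBd : boundary_vertices_ok G Bd)
  (* X, dX, iota is the metric completion of (G, d) *)
  (Hcompl : is_metric_completion G X dX iota)
  (Hcpt : compact_space X dX)
  (Htd : totally_disconnected X dX (bdry G Bd X iota))
  (* data of the lemma *)
  (E : X -> Prop) (f : X -> R) (C eps t : R)
  (HE : clopen_in X dX (bdry G Bd X iota) E)
  (HEc : clopen_in X dX (bdry G Bd X iota)
           (fun x => bdry G Bd X iota x /\ ~ E x))
  (HEne : exists x, E x)
  (HEcne : exists x, bdry G Bd X iota x /\ ~ E x)
  (Hharm : harmonic G Bd X dX iota f)
  (HC : 0 <= C)
  (HfE : forall x, E x -> f x = C)
  (HfEc : forall x, bdry G Bd X iota x /\ ~ E x -> C < f x)
  (Heps : 0 < eps)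
  (Hreg : regular_value G X iota f t)
  (Hmin : exists m, (exists x0, (bdry G Bd X iota x0 /\ ~ E x0) /\ f x0 = m) /\
                    (forall x, bdry G Bd X iota x /\ ~ E x -> m <= f x) /\
                    C < t < m)
  (Hdist : forall x, f x <= t -> exists y, E y /\ dX x y < eps) :
  exists S : list (Ed G * R),
    NoDup S /\
    (* f^{-1}(t) is the finite set S of points interior to edges *)
    (forall p, In p S -> 0 < snd p < len G (fst p)) /\
    (forall x, f x = t <-> exists p, In p S /\ x = iota (pt G (fst p) (snd p))) /\
    (* G_t = G~ ∩ f^{-1}([t,oo)) is a union of closed edges of G~ *)
    (forall p : Point G, t <= f (iota p) ->
       exists e a b s, tilde_edge G S e a b /\ a <= s <= b /\ p = pt G e s /\
                       seg_in_Gt G X iota f t e a b) /\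
    (* each point (e,s) of f^{-1}(t) has degree one in G_t, and the derivative
       of f at it, into the unique incident edge of G_t, is positive *)
    (forall e s, In (e, s) S ->
       exists a b, tilde_edge G S e a s /\ tilde_edge G S e s b /\
         ((seg_in_Gt G X iota f t e s b /\ ~ seg_in_Gt G X iota f t e a s /\
           0 < slope G X iota f e)
          \/
          (seg_in_Gt G X iota f t e a s /\ ~ seg_in_Gt G X iota f t e s b /\
           0 < - slope G X iota f e))).
Proof.
  destruct Hharm as [Hcont [Hlin _]].
  destruct Hcompl as [Hmet [Hiso [Hdense _]]].
  destruct Hmet as [Hd0 [Hdeq [Hdsym Htri]]].
  destruct Hmin as [m [_ [Hm Htm]]].
  destruct Hreg as [_ Hncrit].
  set (k := slope G X iota f) in *.
  set (r := fun e => (t - Defs.fe G X iota f e 0) / k e).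
  set (P := fun e => k e <> 0 /\ 0 < r e < len G e).
  assert (F1 : forall e, k e <> 0 -> forall x, 0 <= x <= len G e ->
                 Defs.fe G X iota f e x = t + k e * (x - r e)).
  { intros e Hk x Hx. rewrite Hlin by exact Hx. unfold r. field. exact Hk. }
  assert (F2' : forall e s (h : 0 < s < len G e), Defs.fe G X iota f e s = t -> P e /\ s = r e).
  { intros e s h Hfs.
    assert (Hk : k e <> 0).
    { intro Hk0. apply Hncrit.
      exists (inr (exist (fun p : Ed G * R => 0 < snd p < len G (fst p)) (e, s) h)).
      split; [simpl; exact Hk0|].
      unfold Defs.fe in Hfs. rewrite (pt_inr G e s h) in Hfs. exact Hfs. }
    rewrite Hlin in Hfs by lra.
    assert (Hs : s = r e). { unfold r. rewrite <- Hfs. field. exact Hk. }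
    split; [split; [exact Hk| rewrite <- Hs; exact h]|exact Hs]. }
  assert (F2 : forall x, f x = t -> exists e, P e /\ x = iota (pt G e (r e))).
  { intros x Hx.
    assert (Hnb : ~ bdry G Bd X iota x).
    { intros Hb. destruct (classic (E x)) as [HEx|HEx].
      - rewrite HfE in Hx by exact HEx. lra.
      - pose proof (Hm x (conj Hb HEx)). lra. }
    unfold bdry in Hnb. apply NNPP in Hnb. destruct Hnb as [p [Hp Hpx]].
    destruct p as [v|q].
    - exfalso; apply Hncrit. exists (inl v); split; [exact I|congruence].
    - destruct q as [[e s] h]; simpl in h.
      assert (Hfs : Defs.fe G X iota f e s = t).
      { unfold Defs.fe. rewrite (pt_inr G e s h). congruence. }
      destruct (F2' e s h Hfs) as [HP Hs].
      exists e; split; [exact HP|]. rewrite <- Hs, (pt_inr G e s h). congruence. }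
  assert (F3 : forall e, P e -> f (iota (pt G e (r e))) = t).
  { intros e [Hk Hr]. change (Defs.fe G X iota f e (r e) = t). rewrite F1 by (auto; lra). ring. }
  assert (F4 : exists lS, NoDup lS /\ forall e, In e lS <-> P e).
  { set (rho := fun e => Rmin (r e) (len G e - r e)).
    set (U := fun (i : option (Ed G)) y => match i with
              | None => f y <> t
              | Some e => P e /\ dX (iota (pt G e (r e))) y < rho e end).
    destruct (Hcpt (option (Ed G)) U) as [l Hl].
    - intros [e|] x Hx; simpl in Hx.
      + destruct Hx as [HP Hd]. exists (rho e - dX (iota (pt G e (r e))) x). split; [lra|].
        intros y Hy. split; [exact HP|]. pose proof (Htri (iota (pt G e (r e))) x y). lra.
      + destruct (Hcont x (Rabs (f x - t))) as [d [Hd Hc]].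
        { apply Rabs_pos_lt. lra. }
        exists d; split; [exact Hd|]. intros y Hy Hyt. specialize (Hc y Hy).
        rewrite Hyt in Hc. lra.
    - intros x. destruct (Req_dec (f x) t) as [Hx|Hx].
      + destruct (F2 x Hx) as [e [HP ->]]. exists (Some e). simpl. split; [exact HP|].
        rewrite (proj2 (Hdeq _ _) eq_refl). destruct HP as [_ Hr].
        unfold rho. apply Rmin_glb_lt; lra.
      + exists None. exact Hx.
    - apply (nodup_of_cover _ P
        (flat_map (fun i => match i with Some e => e :: nil | None => nil end) l)).
      intros e HP. destruct (Hl (iota (pt G e (r e)))) as [[e'|] [Hin HU]].
      + simpl in HU. destruct HU as [HP' Hd].
        destruct (classic (e' = e)) as [He|Hne].
        * subst e'. apply in_flat_map. exists (Some e). split; [exact Hin|left; reflexivity].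
        * exfalso.
          destruct HP' as [Hk' Hr']. destruct HP as [Hk Hr].
          destruct (geo_exists G Hconn (pt G e' (r e')) (pt G e (r e)) (rho e')) as [r0 [Hg Hr0]].
          { exists (src G e'), (r e'), (src G e), (r e).
            rewrite (pt_inr G e' (r e') Hr'), (pt_inr G e (r e) Hr). simpl.
            split; left; split; reflexivity. }
          { intros r1 Hr1. rewrite (pt_inr G e' (r e') Hr'), (pt_inr G e (r e) Hr) in Hr1.
            exact (path_lb G (exist (fun p : Ed G * R => 0 < snd p < len G (fst p)) (e', r e') Hr') (exist (fun p : Ed G * R => 0 < snd p < len G (fst p)) (e, r e) Hr) r1 Hne Hr1). }
          apply Hiso in Hg. lra.
      + simpl in HU. exfalso. apply HU. apply F3. exact HP. }
  destruct F4 as [lS [HndS HlS]].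
  set (S := map (fun e => (e, r e)) lS).
  assert (C1 : forall e c, In (e, c) S <-> P e /\ c = r e).
  { intros e c. unfold S. rewrite in_map_iff. split.
    - intros [e' [Heq Hin]]. injection Heq as <- <-. split; [apply HlS; exact Hin|reflexivity].
    - intros [HP ->]. exists e. split; [reflexivity|apply HlS; exact HP]. }
  assert (L : forall e, ~ P e -> forall s, 0 <= s <= len G e -> t < Defs.fe G X iota f e s ->
              forall x, 0 <= x <= len G e -> t <= Defs.fe G X iota f e x).
  { intros e HnP s Hs Hts x Hx.
    destruct (Req_dec (k e) 0) as [Hk0|Hk].
    - rewrite Hlin in Hts |- * by assumption. rewrite Hk0 in Hts |- *. lra.
    - rewrite F1 in Hts |- * by assumption.
      assert (Hr : r e <= 0 \/ len G e <= r e).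
      { destruct (Rle_dec (r e) 0); [left; assumption|].
        destruct (Rle_dec (len G e) (r e)); [right; assumption|].
        exfalso; apply HnP; split; [exact Hk|lra]. }
      destruct (Rlt_dec 0 (k e)) as [Hkp|Hkn]; destruct Hr as [Hr|Hr]; nra. }
  assert (Hlen := len_pos G).
  assert (Tsub : forall e a b, 0 <= a -> a < b -> b <= len G e -> is_cut G S e a -> is_cut G S e b ->
             (forall c, a < c < b -> In (e, c) S -> False) -> tilde_edge G S e a b).
  { intros e a b H1 H2 H3 H4 H5 H6. unfold tilde_edge. repeat split; try assumption.
    intros c Hc [Hc0|[Hcl|Hin]]; [lra|lra|]. exact (H6 c Hc Hin). }
  assert (Cut0 : forall e, is_cut G S e 0) by (intros; left; reflexivity).
  assert (CutL : forall e, is_cut G S e (len G e)) by (intros; right; left; reflexivity).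
  assert (CutR : forall e, P e -> is_cut G S e (r e)) by (intros e HP; right; right; apply C1; auto).
  assert (NoIn : forall e c, In (e, c) S -> c = r e) by (intros e c H; apply C1 in H; tauto).
  exists S. split; [|split; [|split; [|split]]].
  - unfold S. apply Injective_map_NoDup; [|exact HndS].
    intros x y Hxy. injection Hxy; auto.
  - intros [e c] Hin. apply C1 in Hin. destruct Hin as [[_ Hr] ->]. exact Hr.
  - intros x. split.
    + intros Hx. destruct (F2 x Hx) as [e [HP ->]]. exists (e, r e). split; [apply C1; auto|reflexivity].
    + intros [[e c] [Hin ->]]. apply C1 in Hin. destruct Hin as [HP ->]. apply F3; exact HP.
  - intros p Hp. destruct p as [v|q].
    + assert (Hv : t < f (iota (inl v))).
      { destruct (Req_dec (f (iota (inl v))) t) as [Heq|Hne]; [|lra].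
        exfalso; apply Hncrit. exists (inl v); split; [exact I|exact Heq]. }
      assert (Hinc : exists e, src G e = v \/ tgt G e = v).
      { apply NNPP; intros Hno.
        assert (Hall : forall u, u = v).
        { intros u. destruct (Hconn v u) as [[|e l] Hw]; simpl in Hw.
          - symmetry; exact Hw.
          - exfalso; apply Hno; exists e; destruct Hw as [[H _]|[H _]]; auto. }
        assert (Hpt : forall p : Point G, p = inl v).
        { intros [u|q]; [rewrite (Hall u); reflexivity|].
          exfalso; apply Hno. exists (fst (proj1_sig q)). left; apply Hall. }
        assert (Hx : forall z, z = iota (inl v)).
        { intros z. apply Hdeq. destruct (Req_dec (dX z (iota (inl v))) 0) as [H0|H0]; [exact H0|exfalso].
          pose proof (Hd0 z (iota (inl v))).
          destruct (Hdense z (dX z (iota (inl v)))) as [p Hp']; [lra|].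
          rewrite (Hpt p) in Hp'. lra. }
        destruct HEne as [x0 Hx0]. destruct HEcne as [x1 [_ Hx1]].
        apply Hx1. rewrite (Hx x1), <- (Hx x0). exact Hx0. }
      destruct Hinc as [e [Hs|Ht]].
      * assert (H0 : t < Defs.fe G X iota f e 0).
        { unfold Defs.fe. rewrite pt_0, Hs. exact Hv. }
        pose proof (Hlen e).
        destruct (classic (P e)) as [HP|HnP].
        -- pose proof HP as [Hk Hr].
           rewrite F1 in H0 by lra.
           assert (Hkn : k e < 0) by (destruct (Rlt_dec (k e) 0); [assumption|nra]).
           exists e, 0, (r e), 0. split; [|split; [lra|split]].
           ++ apply Tsub; [lra|lra|lra|apply Cut0|apply CutR; exact HP|].
              intros c Hc Hin. apply NoIn in Hin. lra.
           ++ rewrite pt_0, Hs; reflexivity.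
           ++ intros x Hx. rewrite F1 by (auto; lra). nra.
        -- exists e, 0, (len G e), 0. split; [|split; [lra|split]].
           ++ apply Tsub; [lra|lra|lra|apply Cut0|apply CutL|].
              intros c Hc Hin. apply C1 in Hin. tauto.
           ++ rewrite pt_0, Hs; reflexivity.
           ++ intros x Hx. apply (L e HnP 0); [lra|exact H0|exact Hx].
      * assert (H0 : t < Defs.fe G X iota f e (len G e)).
        { unfold Defs.fe. rewrite pt_len, Ht. exact Hv. }
        pose proof (Hlen e).
        destruct (classic (P e)) as [HP|HnP].
        -- pose proof HP as [Hk Hr].
           rewrite F1 in H0 by lra.
           assert (Hkp : 0 < k e) by (destruct (Rlt_dec 0 (k e)); [assumption|nra]).
           exists e, (r e), (len G e), (len G e). split; [|split; [lra|split]].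
           ++ apply Tsub; [lra|lra|lra|apply CutR; exact HP|apply CutL|].
              intros c Hc Hin. apply NoIn in Hin. lra.
           ++ rewrite pt_len, Ht; reflexivity.
           ++ intros x Hx. rewrite F1 by (auto; lra). nra.
        -- exists e, 0, (len G e), (len G e). split; [|split; [lra|split]].
           ++ apply Tsub; [lra|lra|lra|apply Cut0|apply CutL|].
              intros c Hc Hin. apply C1 in Hin. tauto.
           ++ rewrite pt_len, Ht; reflexivity.
           ++ intros x Hx. apply (L e HnP (len G e)); [lra|exact H0|exact Hx].
    + destruct q as [[e s] h]; simpl in h.
      assert (Hfs : t <= Defs.fe G X iota f e s).
      { unfold Defs.fe. rewrite (pt_inr G e s h). exact Hp. }
      assert (Hpt : inr (exist (fun p : Ed G * R => 0 < snd p < len G (fst p)) (e, s) h) = pt G e s)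
        by (symmetry; apply pt_inr).
      pose proof (Hlen e).
      destruct (classic (P e)) as [HP|HnP].
      -- pose proof HP as [Hk Hr]. rewrite F1 in Hfs by lra.
         destruct (Rlt_dec 0 (k e)) as [Hkp|Hkn].
         ++ assert (r e <= s) by nra.
            exists e, (r e), (len G e), s. split; [|split; [lra|split]].
            ** apply Tsub; [lra|lra|lra|apply CutR; exact HP|apply CutL|].
               intros c Hc Hin. apply NoIn in Hin. lra.
            ** exact Hpt.
            ** intros x Hx. rewrite F1 by (auto; lra). nra.
         ++ assert (Hkn' : k e < 0) by (destruct (Rlt_dec (k e) 0); [assumption|exfalso; apply Hk; lra]).
            assert (s <= r e) by nra.
            exists e, 0, (r e), s. split; [|split; [lra|split]].
            ** apply Tsub; [lra|lra|lra|apply Cut0|apply CutR; exact HP|].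
               intros c Hc Hin. apply NoIn in Hin. lra.
            ** exact Hpt.
            ** intros x Hx. rewrite F1 by (auto; lra). nra.
      -- assert (Hlt : t < Defs.fe G X iota f e s).
         { destruct (Req_dec (Defs.fe G X iota f e s) t) as [Heq|Hne]; [|lra].
           exfalso; apply HnP; apply (F2' e s h Heq). }
         exists e, 0, (len G e), s. split; [|split; [lra|split]].
         ++ apply Tsub; [lra|lra|lra|apply Cut0|apply CutL|].
            intros c Hc Hin. apply C1 in Hin. tauto.
         ++ exact Hpt.
         ++ intros x Hx. apply (L e HnP s); [lra|exact Hlt|exact Hx].
  - intros e s Hin. apply C1 in Hin. destruct Hin as [HP ->].
    pose proof HP as [Hk Hr]. pose proof (Hlen e).
    assert (T1 : tilde_edge G S e 0 (r e)).
    { apply Tsub; [lra|lra|lra|apply Cut0|apply CutR; exact HP|].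
      intros c Hc Hin. apply NoIn in Hin. lra. }
    assert (T2 : tilde_edge G S e (r e) (len G e)).
    { apply Tsub; [lra|lra|lra|apply CutR; exact HP|apply CutL|].
      intros c Hc Hin. apply NoIn in Hin. lra. }
    exists 0, (len G e). split; [exact T1|split; [exact T2|]].
    destruct (Rlt_dec 0 (k e)) as [Hkp|Hkn].
    + left. split; [|split; [|exact Hkp]].
      * intros x Hx. rewrite F1 by (auto; lra). nra.
      * intros Hseg. assert (Hz : 0 <= 0 <= r e) by lra. specialize (Hseg 0 Hz).
        rewrite F1 in Hseg by (auto; lra). nra.
    + assert (Hkn' : k e < 0) by (destruct (Rlt_dec (k e) 0); [assumption|exfalso; apply Hk; lra]).
      right. split; [|split; [|lra]].
      * intros x Hx. rewrite F1 by (auto; lra). nra.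
      * intros Hseg. assert (Hz : r e <= len G e <= len G e) by lra. specialize (Hseg _ Hz).
        rewrite F1 in Hseg by (auto; lra). nra.
Qed.
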